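(* Let $k \geq 3$ be an integer and let $n$ be a $k$-admissible integer such that $n \in \{2k,2k+1\}$. Any non-reducible partial $k$-star design of order $n$ with $u(n,k)$ stars is completable.
   Context: A $k$-star is a copy of $K_{1,k}$; its vertex of degree $k$ is the centre and the others are leaves. A partial $k$-star design of order $n$ is a pair $(V,\mathcal{A})$ where $V$ is a set of $n$ vertices and $\mathcal{A}$ is a set of edge-disjoint $k$-stars that are subgraphs of the complete graph $K_V$; it is completable if there is a set $\mathcal{B}\supseteq\mathcal{A}$ of edge-disjoint $k$-stars in $K_V$ covering all edges of $K_V$. A positive integer $n$ is $k$-admissible if $\binom{n}{2}\equiv 0 \pmod{k}$. Here \[u(n,k)= \begin{cases} 2 \lfloor \frac{n-2}{k} \rfloor-1 & \text{if $n \not \equiv 1\pmod{k}$},\\ \frac{2(n-1)}{k} - 2 & \text{if $n \equiv 1\pmod{k}$.} \end{cases} \] A partial $k$-star design $(V,\mathcal{A})$ of order $n$ is reducible if $n \equiv 1 \pmod{k}$, $|\mathcal{A}|=u(n,k)$, and there is a vertex which is the centre of at least one star in $\mathcal{A}$ and is not a leaf of any star in $\mathcal{A}$; otherwise it is non-reducible. *)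

(* Defs.v *)
From mathcomp Require Import all_boot.
Set Implicit Arguments. Unset Strict Implicit. Unset Printing Implicit Defensive.

(* Vertex set V = 'I_n (order n).  Edges of K_V are 2-element sets [set x; y], x != y.
   A star is encoded as (centre, leaf set). *)
Definition star (n : nat) := ('I_n * {set 'I_n})%type.

Definition is_kstar (n k : nat) (s : star n) : bool :=
  (s.1 \notin s.2) && (#|s.2| == k).

Definition star_edges (n : nat) (s : star n) : {set {set 'I_n}} :=
  [set [set s.1; l] | l in s.2].

Definition edge_disjoint (n : nat) (A : {set star n}) : Prop :=
  forall s t, s \in A -> t \in A -> s != t ->
    [disjoint star_edges s & star_edges t].

Definition partial_design (n k : nat) (A : {set star n}) : Prop :=
  (forall s, s \in A -> is_kstar k s) /\ edge_disjoint A.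

Definition completable (n k : nat) (A : {set star n}) : Prop :=
  exists B : {set star n},
    [/\ A \subset B, partial_design k B &
        forall x y : 'I_n, x != y ->
          exists2 s, s \in B & [set x; y] \in star_edges s].

Definition admissible (n k : nat) : bool := 'C(n, 2) %% k == 0.

Definition u (n k : nat) : nat :=
  if n %% k == 1 then (2 * (n - 1)) %/ k - 2
  else 2 * ((n - 2) %/ k) - 1.

Definition reducible (n k : nat) (A : {set star n}) : Prop :=
  [/\ n %% k = 1, #|A| = u n k &
      exists v : 'I_n,
        (exists2 s, s \in A & s.1 = v) /\ (forall s, s \in A -> v \notin s.2)].

(* Main.v *)
Require Import Defs.
From mathcomp Require Import all_boot.
From mathcomp Require Import zify.
Unset Implicit Arguments.

Definition wrap (N w j : nat) := if w + j < N then w + j else w + j - N.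
Definition gI (k n : nat) (c : 'I_n) (w : nat) (j : 'I_(k-1)) : 'I_n :=
  insubd c (wrap n.-1 w j.+1).
Definition Lc (k n : nat) (c : 'I_n) (w : nat) : {set 'I_n} :=
  insubd c n.-1 |: [set gI k n c w j | j : 'I_(k-1)].

Lemma vins n (c : 'I_n) m : m < n -> val (insubd c m) = m.
Proof. by move=> h; rewrite val_insubd h. Qed.

Lemma wrap_lt N w j : w < N -> 0 < j -> j < N -> wrap N w j < N.
Proof. rewrite /wrap; case: ifP => h; lia. Qed.

Lemma mem_Lc k n (c : 'I_n) w (v : 'I_n) : 3 <= k -> n = 2 * k -> w < n.-1 ->
  (v \in Lc k n c w) <-> (val v = n.-1 \/ exists2 j, j < k - 1 & val v = wrap n.-1 w j.+1).
Proof.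
move=> k3 nE wN; rewrite /Lc !inE; split.
- case/orP => [/eqP -> | /imsetP [j _ ->]].
  + by rewrite vins; [left | lia].
  + right; exists j; first by case: j.
    have := wrap_lt _ _ _ wN (isT : 0 < j.+1).
    case: j => j /= jk h; rewrite /gI vins //=; lia.
- case => [vN | [j jk vj]].
  + apply/orP; left; apply/eqP; apply: val_inj; rewrite /= vins; [exact: vN | lia].
  + apply/orP; right; apply/imsetP; exists (Ordinal jk) => //.
    have := wrap_lt _ _ _ wN (isT : 0 < j.+1) => h.
    apply: val_inj; rewrite /= /gI vins /=; [exact: vj | lia].
Qed.

Lemma Lc_card k n (c : 'I_n) w : 3 <= k -> n = 2 * k -> w < n.-1 -> #|Lc k n c w| = k.
Proof.
move=> k3 nE wN; rewrite /Lc cardsU1 card_imset.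
- rewrite card_ord; have -> : insubd c n.-1 \notin [set gI k n c w j | j : 'I_(k-1)].
    apply/imsetP => -[j _ /(congr1 val)]; rewrite /gI !val_insubd.
    have := wrap_lt _ _ _ wN (isT : 0 < j.+1).
    case: j => j /= jk; case: ifP; case: ifP; lia.
  lia.
- move=> i j /(congr1 val); rewrite /gI !val_insubd.
  have := wrap_lt _ _ _ wN (isT : 0 < i.+1); have := wrap_lt _ _ _ wN (isT : 0 < j.+1).
  case: i => i /= ik; case: j => j /= jk.
  move=> h1 h2; rewrite !ifT; try lia.
  move=> e; apply: val_inj => /=; move: e; rewrite /wrap; case: ifP; case: ifP; lia.
Qed.

Lemma Lc_asym k n (c a b : 'I_n) : 3 <= k -> n = 2 * k -> val a < n.-1 -> val b < n.-1 ->
  a != b -> b \in Lc k n c (val a) -> a \in Lc k n c (val b) -> False.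
Proof.
move=> k3 nE aN bN ab /(mem_Lc _ _ _ _ _ k3 nE aN) [h|[j jk hj]]; first lia.
move=> /(mem_Lc _ _ _ _ _ k3 nE bN) [h|[j' jk' hj']]; first lia.
have {}ab : val a <> val b by move=> e; move/eqP: ab; apply; apply: val_inj.
move: hj hj'; rewrite /wrap; case: ifP => h1; case: ifP => h2; lia.
Qed.

Lemma Lc_cover k n (c x y : 'I_n) : 3 <= k -> n = 2 * k -> x != y ->
  exists2 w : 'I_n, val w < n.-1 &
    ((w = x /\ y \in Lc k n c (val w)) \/ (w = y /\ x \in Lc k n c (val w))).
Proof.
move=> k3 nE xy.
have {}xy' : val x <> val y by move=> e; move/eqP: xy; apply; apply: val_inj.
have xn : val x < n := ltn_ord x; have yn : val y < n := ltn_ord y.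
have [xN|xN] := eqVneq (val x) n.-1.
  have yN : val y < n.-1 by lia.
  exists y => //; right; split => //; apply/(mem_Lc _ _ _ _ _ k3 nE yN); by left.
have [yN|yN] := eqVneq (val y) n.-1.
  have xN' : val x < n.-1 by lia.
  exists x => //; left; split => //; apply/(mem_Lc _ _ _ _ _ k3 nE xN'); by left.
have xN' : val x < n.-1 by lia.
have yN' : val y < n.-1 by lia.
have Lx : forall j, j < k - 1 -> val y = wrap n.-1 (val x) j.+1 -> exists2 w : 'I_n, val w < n.-1 &
    ((w = x /\ y \in Lc k n c (val w)) \/ (w = y /\ x \in Lc k n c (val w))).
  move=> j jk e; exists x => //; left; split => //; apply/(mem_Lc _ _ _ _ _ k3 nE xN'); right.
  by exists j.
have Ly : forall j, j < k - 1 -> val x = wrap n.-1 (val y) j.+1 -> exists2 w : 'I_n, val w < n.-1 &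
    ((w = x /\ y \in Lc k n c (val w)) \/ (w = y /\ x \in Lc k n c (val w))).
  move=> j jk e; exists y => //; right; split => //; apply/(mem_Lc _ _ _ _ _ k3 nE yN'); right.
  by exists j.
rewrite /wrap in Lx Ly.
have [h|h] := leqP (val x) (val y).
  have [h2|h2] := leqP (val y - val x) (k - 1).
    apply: (Lx (val y - val x).-1); first lia. rewrite ifT; lia.
  apply: (Ly (val x + n.-1 - val y).-1); first lia. rewrite ifF; lia.
have [h2|h2] := leqP (val x - val y) (k - 1).
  apply: (Ly (val x - val y).-1); first lia. rewrite ifT; lia.
apply: (Lx (val y + n.-1 - val x).-1); first lia. rewrite ifF; lia.
Qed.

Lemma exists_f k n (c : 'I_n) (L : {set 'I_n}) : 3 <= k -> n = 2 * k ->
  c \notin L -> #|L| = k ->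
  exists f : 'I_n -> 'I_n, [/\ injective f, f (insubd c 0) = c & f @: Lc k n c 0 = L].
Proof.
move=> k3 nE cL Lk.
have [z zL] : exists z, z \in L.
  apply/set0Pn; rewrite -card_gt0; lia.
pose L' := L :\ z. pose M := ~: (c |: L).
have sL : size (enum L') = k - 1.
  rewrite -cardE /L'; have := cardsD1 z L; rewrite zL /=; rewrite Lk; lia.
have sM : size (enum M) = k - 1.
  rewrite -cardE /M; have := cardsC (c |: L); rewrite cardsU1 cL card_ord /= Lk; lia.
pose e := [:: c] ++ enum L' ++ enum M ++ [:: z].
have se : size e = n by rewrite /e !size_cat sL sM /=; lia.
have ue : uniq e.
  apply: (leq_size_uniq (enum_uniq 'I_n)); last by rewrite se size_enum_ord.
  move=> x _; rewrite /e !mem_cat !inE !mem_enum /L' /M !inE.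
  by case: (x == c); case: (x == z); case: (x \in L).
exists (fun i => nth c e i); split.
- move=> i j /eqP; rewrite nth_uniq ?se //; by move/eqP/val_inj.
- by rewrite vins //; lia.
- apply/eqP; rewrite eqEcard card_imset; last first.
    move=> i j /eqP; rewrite nth_uniq ?se //.
    by move/eqP/val_inj.
  rewrite Lc_card // ?Lk ?leqnn ?andbT; last lia.
  apply/subsetP => y /imsetP [v /(mem_Lc _ _ _ _ _ k3 nE) vL ->].
  have {}vL := vL ltac:(lia).
  case: vL => [vN | [j jk vj]].
  + rewrite vN /e !nth_cat /= sL sM ifF; last lia.
    rewrite ifF; last lia. rewrite ifF; last lia.
    have -> : n.-1 - 1 - (k - 1) - (k - 1) = 0 by lia.
    by [].
  + rewrite vj /wrap ifT; last lia.
    rewrite /e !nth_cat /= sL ifT; last lia.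
    have : nth c (enum L') (0 + j.+1 - 1) \in enum L' by apply: mem_nth; rewrite sL; lia.
    by rewrite mem_enum /L' !inE => /andP [].
Qed.

Lemma set2_eq (T : finType) (a b a' b' : T) : a != b ->
  [set a; b] = [set a'; b'] -> (a = a' /\ b = b') \/ (a = b' /\ b = a').
Proof.
move=> ab E.
have ha : a \in [set a'; b'] by rewrite -E !inE eqxx.
have hb : b \in [set a'; b'] by rewrite -E !inE eqxx orbT.
have ha' : a' \in [set a; b] by rewrite E !inE eqxx.
have hb' : b' \in [set a; b] by rewrite E !inE eqxx orbT.
move: ha hb ha' hb'; rewrite !inE.
case/orP=> /eqP ea; case/orP=> /eqP eb; subst; rewrite ?eqxx //= in ab *; try by [left|right].
Qed.

Lemma u_even k : 3 <= k -> u (2 * k) k = 1.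
Proof.
move=> k3; rewrite /u.
have -> : (2 * k) %% k = 0 by rewrite modnMl.
have -> : 2 * k - 2 = 1 * k + (k - 2) by lia.
rewrite divnMDl; last lia. rewrite (@divn_small (k-2)) //; lia.
Qed.

Lemma mod_odd k : 3 <= k -> (2 * k + 1) %% k = 1.
Proof. move=> k3; rewrite modnMDl modn_small //; lia. Qed.
Lemma u_odd k : 3 <= k -> u (2 * k + 1) k = 2.
Proof.
move=> k3; rewrite /u mod_odd //=.
have -> : 2 * (2 * k + 1 - 1) = 4 * k by lia.
rewrite mulnK //; lia.
Qed.

Theorem lemma9 (k n : nat) (A : {set star n}) :
  3 <= k -> admissible n k -> (n = 2 * k \/ n = 2 * k + 1) ->
  partial_design k A -> #|A| = u n k -> ~ reducible k A ->
  completable k A.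
Proof.
move=> k3 _ [nE|nE] [Ak Adis] Au nred; last first.
  exfalso; have u2 : u n k = 2 by rewrite nE u_odd.
  move: Au; rewrite u2 => /eqP /cards2P [s1 [s2 [s12 AE]]].
  have s1A : s1 \in A by rewrite AE !inE eqxx.
  have s2A : s2 \in A by rewrite AE !inE eqxx orbT.
  have [s1k _] := andP (Ak _ s1A). have [s2k _] := andP (Ak _ s2A).
  have red : forall v, (v = s1.1 \/ v = s2.1) -> (forall s, s \in A -> v \notin s.2) -> False.
    move=> v hv hs; apply: nred; split; first by rewrite nE mod_odd.
      by rewrite AE cards2 s12 u2.
    exists v; split => //; case: hv => ->; [exists s1 | exists s2] => //.
  have h1 : s1.1 \in s2.2.
    apply/negPn/negP => h; apply: (red s1.1 (or_introl erefl)) => s.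
    by rewrite AE !inE => /orP [] /eqP ->.
  have h2 : s2.1 \in s1.2.
    apply/negPn/negP => h; apply: (red s2.1 (or_intror erefl)) => s.
    by rewrite AE !inE => /orP [] /eqP ->.
  have := Adis _ _ s1A s2A s12.
  move/pred0P/(_ [set s1.1; s2.1]) => /=.
  move/negbT/negP; apply; rewrite /star_edges; apply/andP; split.
    by apply/imsetP; exists s2.1.
  by apply/imsetP; exists s1.1 => //; rewrite setUC.
have u1 : u n k = 1 by rewrite nE u_even.
move: Au; rewrite u1 => /eqP /cards1P [[c L] AE].
have sA : (c, L) \in A by rewrite AE inE.
have /andP [cL /eqP Lk] := Ak _ sA.
have [f [finj f0 fL]] := exists_f k n c L k3 nE cL Lk.
pose F := fun w : 'I_n => (f w, f @: Lc k n c (val w)).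
have wnot : forall w : 'I_n, val w < n.-1 -> w \notin Lc k n c (val w).
  move=> w wN; apply/negP => /(mem_Lc _ _ _ _ _ k3 nE wN) [h | [j jk hj]]; first lia.
  by move: hj; rewrite /wrap; case: ifP => h; lia.
exists (F @: [set w : 'I_n | val w < n.-1]); split.
- rewrite AE sub1set; apply/imsetP; exists (insubd c 0).
    by rewrite inE vins; lia.
  by rewrite /F f0 vins ?fL //; lia.
- split.
  + move=> s /imsetP [w]; rewrite inE => wN ->; rewrite /is_kstar /F /=.
    rewrite mem_imset // wnot // card_imset // Lc_card //.
    by rewrite eqxx.
  + rewrite /edge_disjoint => s t /imsetP [a]; rewrite inE => aN -> /imsetP [b]; rewrite inE => bN -> Fab.
    have ab : a != b by apply: contraNneq Fab => ->.
    apply/pred0P => e /=; apply/negbTE/negP => /andP [].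
    rewrite /star_edges /F /= => /imsetP [x /imsetP [l lL ->] ->].
    move=> /imsetP [x' /imsetP [l' lL' ->] E].
    have al : f a != f l.
      apply/eqP => /finj eal; rewrite -eal in lL; by rewrite (negbTE (wnot a aN)) in lL.
    case: (set2_eq _ _ _ _ _ al E) => [[/finj eab _] | [/finj al' /finj la]].
      by move/eqP: ab.
    rewrite -al' in lL'; rewrite la in lL; exact: (Lc_asym k n c a b k3 nE aN bN ab lL lL').
- move=> x y xy.
  have [g fg gf] := injF_bij finj.
  have xy0 : g x != g y by apply: contraNneq xy => e; rewrite -(gf x) -(gf y) e.
  have [w wN [[wx yL] | [wy xL]]] := Lc_cover k n c (g x) (g y) k3 nE xy0.
  + exists (F w); first by apply/imsetP; exists w; rewrite ?inE.
    rewrite /star_edges /F /=; apply/imsetP; exists y.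
      by rewrite -{1}(gf y) mem_imset.
    by rewrite wx gf.
  + exists (F w); first by apply/imsetP; exists w; rewrite ?inE.
    rewrite /star_edges /F /=; apply/imsetP; exists x.
      by rewrite -{1}(gf x) mem_imset.
    by rewrite wy gf setUC.
Qed.
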